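(* Let $P=\{S_1,\ldots,S_n\}$ be a homothetic square packing with radii $r_1,\ldots,r_n$ and centres $p_1,\ldots,p_n$, and suppose that for some $1\le s\le n-1$: (i) $\sum_{i=1}^s r_i=\sum_{i=s+1}^n r_i$; (ii) $p_1=(r_1,r_1)$ and $p_{s+1}=(r_{s+1},-r_{s+1})$; (iii) $p_i=\big(r_i+\sum_{j=1}^{i-1}2r_j,\ r_i\big)$ for all $2\le i\le s$, and $p_i=\big(r_i+\sum_{j=s+1}^{i-1}2r_j,\ -r_i\big)$ for all $s+2\le i\le n$. Then the graph $([n],E_y)$ is connected.
   Context: Let $S=\{(x,y): -1\le x,y\le 1\}$. A homothetic packing of $n$ squares is a set $P=\{S_1,\ldots,S_n\}$ with $S_i=r_iS+p_i$, $r_i>0$ (radii), $p_i=(x_i,y_i)\in\mathbb{R}^2$ (centres), such that distinct squares have disjoint interiors. $E_y$ is the set of unordered pairs $\{i,j\}$, $i\ne j$, with $S_i\cap S_j\neq\emptyset$ and $r_i+r_j=|y_i-y_j|\ge|x_i-x_j|$. *)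

(* Defs.v *)
From HB Require Import structures.
From mathcomp Require Import all_boot all_order all_algebra.
From Stdlib Require Import Relations.
Set Implicit Arguments. Unset Strict Implicit. Unset Printing Implicit Defensive.
Import Order.TTheory GRing.Theory Num.Theory.
Local Open Scope ring_scope.

Section Squares.
Variable R : realFieldType.

(* q lies in the square r S + p, where S = [-1,1]^2 *)
Definition in_square (r : R) (p q : R * R) : Prop :=
  `|q.1 - p.1| <= r /\ `|q.2 - p.2| <= r.

Definition in_square_int (r : R) (p q : R * R) : Prop :=
  `|q.1 - p.1| < r /\ `|q.2 - p.2| < r.

Definition homothetic_packing (n : nat) (r : 'I_n -> R) (p : 'I_n -> R * R) : Prop :=
  (forall i, 0 < r i) /\
  (forall i j, i <> j -> ~ exists q, in_square_int (r i) (p i) q /\ in_square_int (r j) (p j) q).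

Definition Ey_edge (n : nat) (r : 'I_n -> R) (p : 'I_n -> R * R) (i j : 'I_n) : Prop :=
  i <> j /\
  (exists q, in_square (r i) (p i) q /\ in_square (r j) (p j) q) /\
  r i + r j = `|(p i).2 - (p j).2| /\ `|(p i).2 - (p j).2| >= `|(p i).1 - (p j).1|.

Definition graph_connected (n : nat) (E : 'I_n -> 'I_n -> Prop) : Prop :=
  forall i j : 'I_n, clos_refl_trans _ E i j.

End Squares.

(* Main.v *)
Require Import Defs.
From HB Require Import structures.
From mathcomp Require Import all_boot all_order all_algebra.
From mathcomp Require Import lra zify.
From Stdlib Require Import Relations.
Import Order.TTheory GRing.Theory Num.Theory.
Local Open Scope ring_scope.
Set Implicit Arguments. Unset Strict Implicit.

Definition Ssum (R : realFieldType) n (r : 'I_n -> R) (lo k : nat) : R :=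
  \sum_(j < n | (lo <= j)%N && (j < k)%N) 2 * r j.

Lemma S_step (R : realFieldType) n (r : 'I_n -> R) lo k (hk : (k < n)%N) :
  (lo <= k)%N -> Ssum r lo k.+1 = Ssum r lo k + 2 * r (Ordinal hk).
Proof.
move=> hlo; rewrite /Ssum (bigD1 (Ordinal hk)) /=; last by rewrite hlo ltnSn.
rewrite addrC; congr (_ + _); apply: eq_bigl => j.
rewrite -val_eqE /= ltnS [(j < k)%N]ltn_neqAle.
by case: (lo <= j)%N; case: (j <= k)%N; case: (val j == k).
Qed.

Lemma S_mono (R : realFieldType) n (r : 'I_n -> R) lo k m :
  (forall i, 0 < r i) -> (k <= m)%N -> Ssum r lo k <= Ssum r lo m.
Proof.
move=> hr hkm; rewrite /Ssum [X in X <= _]big_mkcond [X in _ <= X]big_mkcond /=.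
apply: ler_sum => j _.
case: (lo <= j)%N => /=; last by [].
case hj: (j < k)%N.
  have ->: (j < m)%N by apply: leq_trans hkm.
  by [].
case: (j < m)%N => //. have := hr j; lra.
Qed.

Lemma S_empty (R : realFieldType) n (r : 'I_n -> R) lo k :
  (k <= lo)%N -> Ssum r lo k = 0.
Proof.
move=> h; rewrite /Ssum big_pred0 // => j.
apply/negbTE/negP => /andP [a b]; lia.
Qed.

Lemma exists_cut (R : realFieldType) n (r : 'I_n -> R) lo hi t :
  (lo < hi)%N -> (hi <= n)%N -> 0 <= t -> t <= Ssum r lo hi ->
  exists j : 'I_n, [/\ (lo <= j)%N, (j < hi)%N, Ssum r lo j <= t & t <= Ssum r lo j.+1].
Proof.
move=> hlh; rewrite -(subnKC hlh); move: (hi - lo.+1)%N => d.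
elim: d => [|d IH] hn t0 tle.
  have hk : (lo < n)%N by lia.
  exists (Ordinal hk); split => //=; first by rewrite addn0.
  by rewrite S_empty.
  by rewrite addn0 in tle.
have hk : (lo.+1 + d < n)%N by lia.
case: (lerP t (Ssum r lo (lo.+1 + d))) => h.
  have [j [a b c e]] := IH (ltnW hk) t0 h.
  exists j; split => //; lia.
exists (Ordinal hk); split => //=; try lia; try lra.
by rewrite addnS in tle.
Qed.

Arguments S_mono [R n] r lo [k m].
Arguments exists_cut [R n] r [lo hi t].

Lemma S_step' (R : realFieldType) n (r : 'I_n -> R) lo (j : 'I_n) :
  (lo <= j)%N -> Ssum r lo j.+1 = Ssum r lo j + 2 * r j.
Proof.
move=> h; rewrite (S_step r (ltn_ord j) h); congr (_ + 2 * r _); exact: val_inj.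
Qed.

Lemma Ey_sym (R : realFieldType) n (r : 'I_n -> R) p i j :
  Ey_edge r p i j -> Ey_edge r p j i.
Proof.
move=> [a [[q [b c]] [d e]]]; split; first by move=> h; apply: a.
split; first by exists q.
split; first by rewrite addrC distrC.
by rewrite (distrC (p j).1) (distrC (p j).2).
Qed.

Lemma edge_tb (R : realFieldType) n (r : 'I_n -> R) p s (i j : 'I_n) :
  (forall i, 0 < r i) -> (i < s)%N -> (s <= j)%N ->
  p i = (r i + Ssum r 0 i, r i) -> p j = (r j + Ssum r s j, - r j) ->
  Ssum r 0 i <= Ssum r s j + 2 * r j -> Ssum r s j <= Ssum r 0 i + 2 * r i ->
  Ey_edge r p i j /\ Ey_edge r p j i.
Proof.
move=> hr hi hj pi pj h1 h2.
suff H : Ey_edge r p i j by split => //; apply: Ey_sym.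
have ri := hr i; have rj := hr j.
split; first by move=> e; rewrite e in hi; lia.
split.
  case: (lerP (Ssum r 0 i) (Ssum r s j)) => c.
    exists (Ssum r s j, 0); rewrite /in_square pi pj /= !ler_norml.
    by split; split; apply/andP; split; lra.
  exists (Ssum r 0 i, 0); rewrite /in_square pi pj /= !ler_norml.
  by split; split; apply/andP; split; lra.
rewrite pi pj /= opprK ger0_norm; last by lra.
split => //; rewrite ler_norml; apply/andP; split; lra.
Qed.

Lemma crt_sym T (E : T -> T -> Prop) x y :
  (forall a b, E a b -> E b a) -> clos_refl_trans T E x y -> clos_refl_trans T E y x.
Proof.
move=> hs; elim => [a b e|a|a b c _ h1 _ h2].
- by apply: rt_step; apply: hs.
- exact: rt_refl.
- exact: (rt_trans _ _ _ _ _ h2 h1).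
Qed.

Theorem lemma21 (R : realFieldType) (n : nat) (r : 'I_n -> R) (p : 'I_n -> R * R)
  (s : nat) :
  homothetic_packing r p ->
  (1 <= s)%N -> (s <= n - 1)%N ->
  \sum_(i < n | (i < s)%N) r i = \sum_(i < n | (s <= i)%N) r i ->
  (forall i : 'I_n, val i = 0%N -> p i = (r i, r i)) ->
  (forall i : 'I_n, val i = s -> p i = (r i, - r i)) ->
  (forall i : 'I_n, (1 <= i)%N -> (i < s)%N ->
     p i = (r i + \sum_(j < n | (j < i)%N) 2 * r j, r i)) ->
  (forall i : 'I_n, (s + 1 <= i)%N ->
     p i = (r i + \sum_(j < n | (s <= j)%N && (j < i)%N) 2 * r j, - r i)) ->
  graph_connected (Ey_edge r p).
Proof.
move=> [hr _] hs1 hsn hsum h0 hs hA hB.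
have ns : (s < n)%N by lia.
have posT : forall i : 'I_n, (i < s)%N -> p i = (r i + Ssum r 0 i, r i).
  move=> i hi; case: (posnP i) => [e|g].
    by rewrite h0 // e S_empty // addr0.
  by rewrite hA.
have posB : forall i : 'I_n, (s <= i)%N -> p i = (r i + Ssum r s i, - r i).
  move=> i hi; case: (ltngtP s i) => [g|g|e].
  - by rewrite hB ?addn1.
  - lia.
  by rewrite hs // -e S_empty // addr0.
have W : Ssum r 0 s = Ssum r s n.
  rewrite /Ssum -!mulr_sumr /=; congr (_ * _); rewrite hsum.
  by apply: eq_bigl => j; rewrite ltn_ord andbT.
have S0 : forall lo k, (lo <= k)%N -> 0 <= Ssum r lo k.
  move=> lo k h; rewrite -(S_empty r (leqnn lo)); exact: S_mono.
set E := Ey_edge r p.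
have Esym : forall a b, E a b -> E b a by move=> a b; apply: Ey_sym.
pose v0 := Ordinal (leq_ltn_trans (leq0n s) ns).
have top : forall k (i : 'I_n), val i = k -> (k < s)%N -> clos_refl_trans _ E i v0.
  elim => [|k IH] i ik ks.
    have -> : i = v0 by apply: val_inj; rewrite ik.
    exact: rt_refl.
  have kn : (k < n)%N by lia.
  set i' := Ordinal kn.
  have IH' := IH i' erefl (ltnW ks).
  have tle : Ssum r 0 k.+1 <= Ssum r s n.
    by rewrite -W; apply: S_mono hr (ltnW ks).
  have [j [j1 j2 j3 j4]] := exists_cut r ns (leqnn n) (S0 _ _ (leq0n _)) tle.
  rewrite (S_step' r j1) in j4.
  have st : Ssum r 0 k.+1 = Ssum r 0 i' + 2 * r i' by rewrite (S_step r kn).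
  have ri := hr i; have ri' := hr i'.
  have [e1 _] : E i j /\ E j i.
    apply: (edge_tb (s:=s)) => //.
    - by rewrite ik.
    - by apply: posT; rewrite ik.
    - exact: posB.
    - rewrite ik; lra.
    - rewrite ik; lra.
  have [_ e2] : E i' j /\ E j i'.
    apply: (edge_tb (s:=s)) => //.
    - exact: ltnW ks.
    - apply: posT; exact: ltnW ks.
    - exact: posB.
    - lra.
    - lra.
  exact: (rt_trans _ _ _ _ _ (rt_step _ _ _ _ e1) (rt_trans _ _ _ _ _ (rt_step _ _ _ _ e2) IH')).
have bot : forall d (j : 'I_n), val j = (s + d)%N -> clos_refl_trans _ E j v0.
  elim => [|d IH] j jd.
    apply: rt_step; apply: Esym.
    have ri := hr v0; have rj := hr j.
    have z1 : Ssum r 0 v0 = 0 by rewrite S_empty.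
    have z2 : Ssum r s j = 0 by rewrite S_empty // jd addn0.
    have [e1 _] : E v0 j /\ E j v0.
      apply: (edge_tb (s:=s)) => //.
      - by rewrite jd addn0.
      - apply: posT; exact: hs1.
      - by apply: posB; rewrite jd addn0.
      - lra.
      - lra.
    exact: e1.
  have jv : nat_of_ord j = (s + d.+1)%N := jd.
  have dn : (s + d < n)%N by have := ltn_ord j; lia.
  set j' := Ordinal dn.
  have IH' := IH j' erefl.
  have tle : Ssum r s j <= Ssum r 0 s.
    rewrite W; apply: S_mono => //; exact: ltnW.
  have hs0 : (0 < s)%N by lia.
  have [i [i1 i2 i3 i4]] := exists_cut r hs0 (ltnW ns) (S0 _ _ (leq_trans (leq_addr _ _) (eq_leq (esym jd)))) tle.
  rewrite (S_step' r i1) in i4.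
  have st : Ssum r s j = Ssum r s j' + 2 * r j' by rewrite jd addnS (S_step r dn) // leq_addr.
  have ri := hr i; have rj := hr j; have rj' := hr j'.
  have [_ e1] : E i j /\ E j i.
    apply: (edge_tb (s:=s)) => //.
    - by rewrite jd leq_addr.
    - exact: posT.
    - by apply: posB; rewrite jd leq_addr.
    - lra.
  have [e2 _] : E i j' /\ E j' i.
    apply: (edge_tb (s:=s)) => //.
    - exact: leq_addr.
    - exact: posT.
    - by apply: posB; rewrite /= leq_addr.
    - lra.
    - lra.
  exact: (rt_trans _ _ _ _ _ (rt_step _ _ _ _ e1) (rt_trans _ _ _ _ _ (rt_step _ _ _ _ e2) IH')).
have all0 : forall i, clos_refl_trans _ E i v0.
  move=> i; case: (ltnP i s) => h.
    exact: top.
  by apply: (bot (i - s)%N); rewrite subnKC.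
move=> i j; apply: (rt_trans _ _ _ _ _ (all0 i)); apply: crt_sym => //; exact: all0.
Qed.
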